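(* Let $\psi \colon \operatorname{NOp}_{\alpha}(r, d) \to F(r, d + r)$ be the map sending $L$ to $F_{\alpha}(L, d + r)$. Then $\psi$ is surjective and all fibers have the same dimension.
   Context: Let $\bar C$ be an algebraically closed field of characteristic zero, $\alpha\in\bar C$, and $\partial x = x\partial+1$. $\operatorname{NOp}_\alpha(r,d)$ denotes the set of differential operators $L\in\bar C[x-\alpha][\partial]$ of order exactly $r$ and degree at most $d$ whose leading coefficient $\operatorname{lc}_\partial(L)$ does not vanish at $\alpha$. For such $L$ and $d_1\ge r$, the fundamental matrix $F_\alpha(L,d_1)$ is the $r\times(d_1+1)$ matrix whose first $r$ columns form the identity matrix $I_r$ and each of whose rows consists of the first $d_1+1$ coefficients (in powers of $x-\alpha$) of a power series solution of $L$ at $x=\alpha$. $F(r,d)$ denotes the space of all possible fundamental matrices of degree $d$ for operators of order $r$; it is isomorphic to $\mathbb{A}^{r(d+1-r)}$. *)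

(* Defs.v *)
From HB Require Import structures.
From mathcomp Require Import all_boot all_order all_algebra.
From mathcomp Require Import mpoly.
From Stdlib Require Import ClassicalEpsilon.
Set Implicit Arguments. Unset Strict Implicit. Unset Printing Implicit Defensive.
Import GRing.Theory.
Local Open Scope ring_scope.

(* Coordinates: t = x - alpha, so d/dx = d/dt.  An operator
     L = sum_{i<=r} p_i(t) D^i ,  deg p_i <= d
   is represented by its coefficient matrix A : 'M_(r.+1, d.+1),
   A i k = coefficient of t^k = (x-alpha)^k in p_i.
   A power series y = sum_n y n t^n is a function y : nat -> C. *)

Section Defs.
Variable C : fieldType.

(* coefficient of t^n in L(y):  sum_i sum_{k<=n} p_i[k] * (y^(i))[n-k],
   with (y^(i))[m] = (m+i)(m+i-1)...(m+1) y[m+i] = (m+i)^_i y[m+i]. *)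
Definition op_apply r d (A : 'M[C]_(r.+1, d.+1)) (y : nat -> C) (n : nat) : C :=
  \sum_(i < r.+1) \sum_(k < d.+1 | (k <= n)%N)
     A i k * ((n - k + i) ^_ i)%:R * y (n - k + i)%N.

Definition is_psol r d (A : 'M[C]_(r.+1, d.+1)) (y : nat -> C) : Prop :=
  forall n, op_apply A y n = 0.

(* NOp_alpha(r,d): order exactly r, degree <= d, lc_D(L)(alpha) <> 0.
   lc_D(L)(alpha) = p_r(t = 0) = A r 0. *)
Definition NOp r d (A : 'M[C]_(r.+1, d.+1)) : Prop := A ord_max ord0 != 0.

Definition Fspace r d1 (M : 'M[C]_(r, d1.+1)) : Prop :=
  forall (i : 'I_r) (j : 'I_d1.+1), (j < r)%N -> M i j = (i == j :> nat)%:R.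

Definition is_fundmx r d (A : 'M[C]_(r.+1, d.+1)) d1 (M : 'M[C]_(r, d1.+1)) : Prop :=
  Fspace M /\
  forall i : 'I_r, exists y, is_psol A y /\ forall j : 'I_d1.+1, M i j = y j.

(* F_alpha(L, d1) as a function (the matrix is unique when A is in NOp). *)
Definition fundmx r d (A : 'M[C]_(r.+1, d.+1)) d1 : 'M[C]_(r, d1.+1) :=
  epsilon (inhabits 0) (@is_fundmx r d A d1).

Definition mx_coords m n (A : 'M[C]_(m, n)) : 'I_(m * n) -> C :=
  fun k => mxvec A 0 k.

Definition zariski_closed m n (Z : 'M[C]_(m, n) -> Prop) : Prop :=
  exists P : {mpoly C[m * n]} -> Prop,
    forall A, Z A <-> (forall p, P p -> p.@[mx_coords A] = 0).

Definition closed_in m n (S Y : 'M[C]_(m, n) -> Prop) : Prop :=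
  exists Z, zariski_closed Z /\ forall A, Y A <-> (Z A /\ S A).

Definition irreducible_in m n (S Y : 'M[C]_(m, n) -> Prop) : Prop :=
  [/\ closed_in S Y, exists A, Y A &
      forall Y1 Y2, closed_in S Y1 -> closed_in S Y2 ->
        (forall A, Y A -> Y1 A \/ Y2 A) ->
        (forall A, Y A -> Y1 A) \/ (forall A, Y A -> Y2 A)].

Definition irr_chain m n (S : 'M[C]_(m, n) -> Prop)
    (k : nat) (Ys : nat -> 'M[C]_(m, n) -> Prop) : Prop :=
  (forall i, (i <= k)%N -> irreducible_in S (Ys i)) /\
  (forall i, (i < k)%N ->
     (forall A, Ys i A -> Ys i.+1 A) /\ exists A, Ys i.+1 A /\ ~ Ys i A).

Definition has_dim m n (S : 'M[C]_(m, n) -> Prop) (k : nat) : Prop :=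
  (exists Ys, irr_chain S k Ys) /\ ~ (exists Ys, irr_chain S k.+1 Ys).

End Defs.

(* Main.v *)
Require Import Defs.
From HB Require Import structures.
From mathcomp Require Import all_boot all_order all_algebra.
From mathcomp Require Import mpoly zify.
From Stdlib Require Import ClassicalEpsilon Classical.
Set Implicit Arguments. Unset Strict Implicit. Unset Printing Implicit Defensive.
Import GRing.Theory.
Local Open Scope ring_scope.

Lemma exp_mono a b k : (a <= b)%N -> (a ^ k <= b ^ k)%N.
Proof. by move=> h; elim: k => // k IH; rewrite !expnS leq_mul. Qed.

Lemma ffact_ge a k : ((a.+1) ^ k <= (a + k) ^_ k)%N.
Proof.
elim: k => [|k IH]; first by rewrite ffactn0.
by rewrite addnS ffactSS expnS leq_mul // ltnS leq_addr.
Qed.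

Lemma numeric N E : let M0 := ((N.+1)`! * E.+1 ^ N)%N in
  ~ ('C(M0 + N.+1, N.+1) <= (1 + M0 * E) ^ N)%N.
Proof.
move=> M0 h.
have h1 : (M0.+1 ^ N.+1 <= 'C(M0 + N.+1, N.+1) * (N.+1)`!)%N.
  by rewrite bin_ffact ffact_ge.
have h2 : ('C(M0 + N.+1, N.+1) * (N.+1)`! <= (M0.+1 * E.+1) ^ N * (N.+1)`!)%N.
  rewrite leq_mul2r (leq_trans h) ?orbT //; apply: exp_mono.
  by nia.
have := leq_trans h1 h2.
rewrite expnMn -mulnA [(_ ^ N * _)%N]mulnC -/M0 expnSr mulnC leq_pmul2r ?expn_gt0 //.
by rewrite /M0 mulnC ltnn.
Qed.

Section Hilb.
Variables (C : fieldType) (m n : nat).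

Definition vanish (Y : 'M[C]_(m,n) -> Prop) (p : {mpoly C[m*n]}) :=
  forall A, Y A -> p.@[mx_coords A] = 0.

Definition indep (Y : 'M[C]_(m,n) -> Prop) k (F : nat -> {mpoly C[m*n]}) :=
  forall c : nat -> C, vanish Y (\sum_(i < k) c i *: F i) ->
    forall i, (i < k)%N -> c i = 0.

Lemma indep_bound Y k F D : indep Y k F ->
  (forall i, (i < k)%N -> (msize (F i) <= D)%N) -> (k <= D ^ (m*n))%N.
Proof.
move=> hI hF.
pose T := {ffun 'I_(m*n) -> 'I_D}.
pose mono (t : T) : 'X_{1..m*n} := [multinom (t i : nat) | i < m*n].
pose V := \matrix_(i < k, j < #|T|) (F i)@_(mono (enum_val j)).
have rf : row_free V.
  apply: inj_row_free => v hv.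
  pose p := \sum_(i < k) v 0 i *: F i.
  have p0 : p = 0.
    apply/mpolyP => mm; rewrite mcoeff0 /p raddf_sum /=.
    under eq_bigr do rewrite mcoeffZ.
    case: (boolP [forall i, (mm i < D)%N]) => h.
      pose t : T := [ffun i => Ordinal (forallP h i)].
      have -> : mm = mono t by apply/mnmP => i; rewrite mnmE ffunE.
      transitivity ((v *m V) 0 (enum_rank t)); last by rewrite hv mxE.
      by rewrite mxE; apply: eq_bigr => i _; rewrite mxE enum_rankK.
    have [i hi] : exists i, ~~ (mm i < D)%N.
      by apply/existsP; rewrite -negb_forall.
    apply: big1 => j _.
    suff -> : (F j)@_mm = 0 by rewrite mulr0.
    apply/eqP; rewrite mcoeff_eq0; apply: msize_mdeg_ge.
    apply: (leq_trans (hF _ (ltn_ord j))).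
    rewrite mdegE (bigD1 i) //=; rewrite -leqNgt in hi.
    exact: leq_trans hi (leq_addr _ _).
  have hv0 := hI (fun i => oapp (v 0) 0 (insub i)).
  apply/rowP => j; rewrite mxE.
  have -> : v 0 j = oapp (v 0) 0 (insub (val j)) by rewrite valK.
  apply: hv0 (ltn_ord j) => A _.
  have -> : \sum_(i < k) oapp (v 0) 0 (insub (i : nat)) *: F i = p.
    by apply: eq_bigr => i _; rewrite valK.
  by rewrite p0 meval0.
have := rank_leq_col V; rewrite (eqP rf) card_ffun !card_ord //.
Qed.

Definition primeish (Y : 'M[C]_(m,n) -> Prop) :=
  forall f g, vanish Y (f * g) -> vanish Y f \/ vanish Y g.

Lemma indep_one Y : (exists A, Y A) -> indep Y 1 (fun _ => 1).
Proof.
move=> [A0 hA] c hv i; rewrite ltnS leqn0 => /eqP ->.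
by have := hv A0 hA; rewrite big_ord1 mevalZ meval1 mulr1.
Qed.

Lemma indep_step Y Y' f k1 F1 k2 F2 : primeish Y' -> (forall A, Y A -> Y' A) ->
  vanish Y f -> ~ vanish Y' f -> indep Y k1 F1 -> indep Y' k2 F2 ->
  indep Y' (k1 + k2) (fun i => if (i < k1)%N then F1 i else f * F2 (i - k1)%N).
Proof.
move=> pY sub vf nvf i1 i2 c hv.
rewrite big_split_ord /= in hv.
have e1 : \sum_(i < k1) c (lshift k2 i) *:
   (if (lshift k2 i < k1)%N then F1 (lshift k2 i) else f * F2 (lshift k2 i - k1)%N)
   = \sum_(i < k1) c i *: F1 i.
  by apply: eq_bigr => i _; rewrite /= ltn_ord.
have e2 : \sum_(i < k2) c (rshift k1 i) *:
   (if (rshift k1 i < k1)%N then F1 (rshift k1 i) else f * F2 (rshift k1 i - k1)%N)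
   = f * \sum_(i < k2) c (k1 + i)%N *: F2 i.
  rewrite mulr_sumr; apply: eq_bigr => i _.
  by rewrite /= ltnNge leq_addr /= addKn scalerAr.
rewrite e1 e2 in hv.
have c1 : forall i, (i < k1)%N -> c i = 0.
  apply: i1 => A hA; have := hv A (sub A hA).
  by rewrite mevalD mevalM (vf A hA) mul0r addr0.
have c2 : forall i, (i < k2)%N -> c (k1 + i)%N = 0.
  apply: (i2 (fun i => c (k1 + i)%N)).
  have : vanish Y' (f * \sum_(i < k2) c (k1 + i)%N *: F2 i).
    move=> A hA; have := hv A hA.
    by rewrite (@big1 _ _ _ _ _ _ (fun i : 'I_k1 => c i *: F1 i)) ?add0r //
      => i _; rewrite c1 // scale0r.
  by case/pY.
move=> i; case: (ltnP i k1) => h1 h2; first exact: c1.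
by rewrite -(subnKC h1); apply: c2; rewrite ltn_subLR.
Qed.

Lemma growth (Ys : nat -> 'M[C]_(m,n) -> Prop) k E :
  (forall j, (j <= k)%N -> exists A, Ys j A) ->
  (forall j, (j < k)%N -> primeish (Ys j.+1) /\ (forall A, Ys j A -> Ys j.+1 A) /\
     exists f, vanish (Ys j) f /\ ~ vanish (Ys j.+1) f /\ (msize f + 2 <= E)%N) ->
  forall j, (j <= k)%N -> forall M, exists K F, indep (Ys j) K F /\
     (forall i, (i < K)%N -> (msize (F i) <= 1 + M * E)%N) /\ ('C(M + j, j) <= K)%N.
Proof.
move=> hne hst; elim=> [|j IHj] hj M.
  exists 1%N, (fun _ => 1); split; first by apply: indep_one; apply: hne.
  by split; [move=> i _; rewrite msize1 leq_addr | rewrite bin0].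
elim: M => [|M IHM].
  exists 1%N, (fun _ => 1); split; first by apply: indep_one; apply: hne.
  by split; [move=> i _; rewrite msize1 leq_addr | rewrite add0n binn].
have [K1 [F1 [i1 [d1 c1]]]] := IHj (ltnW hj) M.+1.
have [K2 [F2 [i2 [d2 c2]]]] := IHM.
have [pY [sub [f [vf [nvf df]]]]] := hst j hj.
exists (K1 + K2)%N, (fun i => if (i < K1)%N then F1 i else f * F2 (i - K1)%N).
split; first exact: (indep_step pY sub vf nvf i1 i2).
split.
  move=> i hi; case: ifP => h; first exact: d1.
  have hi2 : (i - K1 < K2)%N by rewrite ltn_subLR // leqNgt h.
  apply: (leq_trans (msizeM_le _ _)).
  have := d2 _ hi2; lia.
rewrite addSn binS addnC leq_add //.
by rewrite -addSnnS.
Qed.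

Lemma irr_primeish S Y : irreducible_in S Y -> primeish Y.
Proof.
case=> [[Z [[P hP] hY]] _ hirr] f g hfg.
pose Y1 := fun A => Y A /\ f.@[mx_coords A] = 0.
pose Y2 := fun A => Y A /\ g.@[mx_coords A] = 0.
have cl : forall h : {mpoly C[m*n]}, closed_in S (fun A => Y A /\ h.@[mx_coords A] = 0).
  move=> h; exists (fun A => Z A /\ h.@[mx_coords A] = 0); split.
    exists (fun p => P p \/ p = h) => A; split.
      by case=> /hP hZ hh p [/hZ|->].
    move=> H; split; first by apply/hP => p hp; apply: H; left.
    by apply: H; right.
  move=> A; split; first by case=> /hY [hZ hS] hh.
  by case=> [[hZ hh] hS]; split => //; apply/hY.
case: (hirr Y1 Y2 (cl f) (cl g)).
- move=> A hA; have := hfg A hA; rewrite mevalM => /eqP; rewrite mulf_eq0.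
  by case/orP => /eqP h; [left|right].
- by move=> h; left => A /h [].
- by move=> h; right => A /h [].
Qed.

Lemma irr_sep S Y Y' : closed_in S Y -> closed_in S Y' ->
  (exists A, Y' A /\ ~ Y A) -> exists f, vanish Y f /\ ~ vanish Y' f.
Proof.
move=> [Z [[P hP] hY]] [Z' [_ hY']] [A0 [h0 n0]].
have hS0 : S A0 by case/hY': h0.
have nZ : ~ Z A0 by move=> z; apply: n0; apply/hY.
have [p hp] : exists p, ~ (P p -> p.@[mx_coords A0] = 0).
  apply: not_all_ex_not => H; apply: nZ; apply/hP => p; exact: H.
have [hPp hp0] : P p /\ p.@[mx_coords A0] <> 0.
  split; first by apply: NNPP => H; apply: hp => /H.
  by move=> H; apply: hp.
exists p; split; last by move=> H; apply: hp0; apply: H.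
by move=> A /hY [/hP hZ _]; apply: hZ.
Qed.

Lemma unif k (Q : nat -> nat -> Prop) :
  (forall j e e', (e <= e')%N -> Q j e -> Q j e') ->
  (forall j, (j < k)%N -> exists e, Q j e) ->
  exists E, forall j, (j < k)%N -> Q j E.
Proof.
move=> mono; elim: k => [|k IH] H; first by exists 0%N.
have [E1 h1] := IH (fun j hj => H j (ltnW hj)).
have [e2 h2] := H k (ltnSn k).
exists (maxn E1 e2) => j; rewrite ltnS leq_eqVlt => /orP [/eqP ->|hj].
  by apply: mono h2; rewrite leq_maxr.
by apply: mono (h1 _ hj); rewrite leq_maxl.
Qed.

Lemma no_long_chain (S : 'M[C]_(m,n) -> Prop) Ys : ~ irr_chain S (m * n).+1 Ys.
Proof.
case=> hirr hstr.
set k := (m * n).+1.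
pose Q := fun j E => exists f, vanish (Ys j) f /\ ~ vanish (Ys j.+1) f /\
     (msize f + 2 <= E)%N.
have hmono : forall j e e', (e <= e')%N -> Q j e -> Q j e'.
  move=> j e e' le [f [h1 [h2 h3]]]; exists f; split=> //; split=> //.
  exact: leq_trans le.
have hex : forall j, (j < k)%N -> exists e, Q j e.
  move=> j hj.
  have [f [h1 h2]] : exists f, vanish (Ys j) f /\ ~ vanish (Ys j.+1) f.
    apply: (@irr_sep S).
    + by case: (hirr j (ltnW hj)).
    + by case: (hirr j.+1 hj).
    + by case: (hstr j hj).
  by exists (msize f + 2)%N, f.
have [E hE] := unif hmono hex.
have ne : forall j, (j <= k)%N -> exists A, Ys j A.
  by move=> j hj; case: (hirr j hj).
have st : forall j, (j < k)%N -> primeish (Ys j.+1) /\ (forall A, Ys j A -> Ys j.+1 A) /\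
     exists f, vanish (Ys j) f /\ ~ vanish (Ys j.+1) f /\ (msize f + 2 <= E)%N.
  move=> j hj; split; first by apply: (@irr_primeish S); apply: hirr.
  split; first by case: (hstr j hj).
  exact: hE.
have [K [F [hi [hd hc]]]] := growth ne st (leqnn k) ((k`! * E.+1 ^ (m * n))%N).
have := indep_bound hi hd.
move=> hb; apply: (@numeric (m * n) E).
exact: leq_trans hc hb.
Qed.


End Hilb.

Section Transfer.
Variables (C : fieldType) (m n : nat).

Definition phi (B : 'M[C]_(m * n)) (A : 'M[C]_(m, n)) : 'M[C]_(m, n) :=
  vec_mx (mxvec A *m B).

Definition lf (B : 'M[C]_(m * n)) (k : 'I_(m * n)) : {mpoly C[m * n]} :=
  \sum_(l < m * n) B l k *: 'X_l.

Lemma lf_eval B k A : (lf B k).@[mx_coords A] = mx_coords (phi B A) k.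
Proof.
rewrite /mx_coords /phi vec_mxK mxE /lf raddf_sum /=.
by apply: eq_bigr => l _; rewrite mevalZ mevalXU mulrC.
Qed.

Lemma closed_pull B (Z : 'M[C]_(m, n) -> Prop) :
  zariski_closed Z -> zariski_closed (fun A => Z (phi B A)).
Proof.
case=> P hP.
pose lt := [tuple lf B k | k < m * n].
exists (fun q => exists p, P p /\ q = p \mPo lt) => A.
have ev : forall p, (p \mPo lt).@[mx_coords A] = p.@[mx_coords (phi B A)].
  move=> p; rewrite comp_mpoly_meval; apply: meval_eq => k.
  by rewrite tnth_mktuple lf_eval.
split.
  by move=> /hP H q [p [hp ->]]; rewrite ev; apply: H.
by move=> H; apply/hP => p hp; rewrite -ev; apply: H; exists p.
Qed.

Lemma closed_in_pull B (S T Y : 'M[C]_(m, n) -> Prop) :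
  (forall A, S A <-> T (phi B A)) -> closed_in T Y ->
  closed_in S (fun A => Y (phi B A)).
Proof.
move=> hST [Z [zc hY]]; exists (fun A => Z (phi B A)); split.
  exact: closed_pull.
by move=> A; rewrite hY hST.
Qed.

Lemma phiK B A : B \in unitmx -> phi (invmx B) (phi B A) = A.
Proof. by move=> u; rewrite /phi vec_mxK mulmxK // mxvecK. Qed.

Lemma phiKV B A : B \in unitmx -> phi B (phi (invmx B) A) = A.
Proof. by move=> u; rewrite /phi vec_mxK mulmxKV // mxvecK. Qed.

Lemma irr_pull B (S T Y : 'M[C]_(m, n) -> Prop) : B \in unitmx ->
  (forall A, S A <-> T (phi B A)) -> irreducible_in T Y ->
  irreducible_in S (fun A => Y (phi B A)).
Proof.
move=> u hST [cl [A0 h0] hirr]; split.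
- exact: closed_in_pull.
- by exists (phi (invmx B) A0); rewrite phiKV.
move=> Y1 Y2 c1 c2 cov.
have hTS : forall A, T A <-> S (phi (invmx B) A) by move=> A; rewrite hST phiKV.
case: (hirr (fun A => Y1 (phi (invmx B) A)) (fun A => Y2 (phi (invmx B) A))).
- exact: closed_in_pull.
- exact: closed_in_pull.
- by move=> A hA; apply: cov; rewrite phiKV.
- by move=> H; left => A /H; rewrite phiK.
- by move=> H; right => A /H; rewrite phiK.
Qed.

Lemma chain_pull B (S T : 'M[C]_(m, n) -> Prop) k Ys : B \in unitmx ->
  (forall A, S A <-> T (phi B A)) -> irr_chain T k Ys ->
  irr_chain S k (fun i A => Ys i (phi B A)).
Proof.
move=> u hST [h1 h2]; split.
  by move=> i hi; apply: irr_pull => //; apply: h1.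
move=> i hi; have [s [A0 [a b]]] := h2 i hi; split.
  by move=> A /s.
by exists (phi (invmx B) A0); rewrite phiKV.
Qed.

Lemma dim_transfer B (S T : 'M[C]_(m, n) -> Prop) k : B \in unitmx ->
  (forall A, S A <-> T (phi B A)) -> has_dim T k -> has_dim S k.
Proof.
move=> u hST [[Ys hY] nT]; split.
  by exists (fun i A => Ys i (phi B A)); apply: chain_pull.
move=> [Zs hY']; apply: nT.
exists (fun i A => Zs i (phi (invmx B) A)); apply: chain_pull hY'.
  by rewrite unitmx_inv.
by move=> A; rewrite hST phiKV.
Qed.

Lemma singleton_closed (A0 : 'M[C]_(m, n)) : zariski_closed (fun A => A = A0).
Proof.
exists (fun p => exists k, p = 'X_k - (mx_coords A0 k)%:MP) => A; split.
  by move=> -> p [k ->]; rewrite mevalB mevalXU mevalC subrr.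
move=> H; apply: (can_inj mxvecK); apply/rowP => k.
have := H _ (ex_intro _ k erefl); rewrite mevalB mevalXU mevalC => /eqP.
by rewrite subr_eq0 => /eqP.
Qed.

Lemma exists_dim (S : 'M[C]_(m, n) -> Prop) : (exists A, S A) ->
  exists k, has_dim S k.
Proof.
move=> [A0 h0].
pose P k := exists Ys, irr_chain S k Ys.
have P0 : P 0%N.
  exists (fun _ A => A = A0); split => // i _; split.
  - exists (fun A => A = A0); split; first exact: singleton_closed.
    by move=> A; split; [move=> -> | case].
  - by exists A0.
  - move=> Y1 Y2 _ _ cov; case: (cov A0 erefl) => h.
      by left => A ->.
    by right => A ->.
have nP : ~ P (m * n).+1 by case=> Ys; apply: no_long_chain.
apply: NNPP => H; apply: nP.
have step : forall k, P k -> P k.+1.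
  move=> k pk; apply: NNPP => npk; apply: H; exists k; split => //.
by elim: (m * n).+1 => // k IH; apply: step.
Qed.

End Transfer.

Section ODE.
Variables (C : fieldType) (charC0 : [pchar C] =i pred0) (r d : nat).
Implicit Types (A : 'M[C]_(r.+1, d.+1)) (y z : nat -> C).

Lemma natr_neq0 k : (0 < k)%N -> (k%:R : C) != 0.
Proof. by move=> h; move/pcharf0P: charC0 => ->; rewrite -lt0n. Qed.

Lemma cnz n : (((n + r) ^_ r)%:R : C) != 0.
Proof. by apply: natr_neq0; rewrite ffact_gt0 leq_addl. Qed.

Lemma op_local A y z n : (forall j, (j <= n + r)%N -> y j = z j) ->
  op_apply A y n = op_apply A z n.
Proof.
move=> H; apply: eq_bigr => i _; apply: eq_bigr => k hk; rewrite H //.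
have := ltn_ord i; lia.
Qed.

Lemma op_ext A y z n : (forall j, y j = z j) -> op_apply A y n = op_apply A z n.
Proof. by move=> H; apply: op_local => j _. Qed.

Lemma op_lin A (a : C) y z n :
  op_apply A (fun j => a * y j + z j) n = a * op_apply A y n + op_apply A z n.
Proof.
rewrite /op_apply mulr_sumr -big_split; apply: eq_bigr => i _.
rewrite mulr_sumr -big_split; apply: eq_bigr => k _.
rewrite mulrDr !mulrA /=; congr (_ * _ + _).
by rewrite mulrC mulrA.
Qed.

Lemma op_linA (a : C) A A' y n :
  op_apply (a *: A + A') y n = a * op_apply A y n + op_apply A' y n.
Proof.
rewrite /op_apply mulr_sumr -big_split; apply: eq_bigr => i _.
rewrite mulr_sumr -big_split; apply: eq_bigr => k _.
by rewrite !mxE !mulrDl !mulrA.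
Qed.

Lemma op_delta A n :
  op_apply A (fun j => (j == n + r)%:R) n = A ord_max ord0 * ((n + r) ^_ r)%:R.
Proof.
rewrite /op_apply big_ord_recr /= big1 ?add0r => [|i _]; last first.
  apply: big1 => k hk.
  have -> : (n - k + widen_ord (leqnSn r) i == n + r)%N = false.
    apply/negbTE; have := ltn_ord i; move: hk; rewrite /=; lia.
  by rewrite mulr0.
rewrite (bigD1 ord0) //= big1 ?addr0 => [|k /andP [hk hk0]].
  by rewrite subn0 eqxx mulr1.
have -> : (n - k + r == n + r)%N = false.
  apply/negbTE; move: hk hk0; rewrite -val_eqE /=; lia.
by rewrite mulr0.
Qed.

Lemma op_split A y n : op_apply A y n =
  A ord_max ord0 * ((n + r) ^_ r)%:R * y (n + r)%N +
  op_apply A (fun j => if j == (n + r)%N then 0 else y j) n.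
Proof.
transitivity (op_apply A (fun j => y (n + r)%N * (j == n + r)%:R +
   (if j == (n + r)%N then 0 else y j)) n).
  apply: op_ext => j; case: eqP => [->|_]; first by rewrite mulr1 addr0.
  by rewrite mulr0 add0r.
by rewrite op_lin op_delta [y _ * _]mulrC.
Qed.

Definition fixstep A t (w : nat -> C) : nat -> C := fun j =>
  if j == (t + r)%N then
    - op_apply A (fun j => if j == (t + r)%N then 0 else w j) t /
      (A ord_max ord0 * ((t + r) ^_ r)%:R)
  else w j.

Fixpoint Yseq A z m t : nat -> C :=
  match t with
  | 0 => z
  | t'.+1 => if (t' < m)%N then Yseq A z m t' else fixstep A t' (Yseq A z m t')
  end.

Definition ext_sol A z m : nat -> C := fun j => Yseq A z m j.+1 j.

Lemma Y_unch A z m t j : j != (t + r)%N -> Yseq A z m t.+1 j = Yseq A z m t j.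
Proof. by move=> h /=; case: ifP => // _; rewrite /fixstep (negbTE h). Qed.

Lemma Y_stab A z m s s' j : (s <= s')%N -> (j < s + r)%N ->
  Yseq A z m s' j = Yseq A z m s j.
Proof.
elim: s' => [|s' IH] hs hj; first by move: hs; rewrite leqn0 => /eqP ->.
move: hs; rewrite leq_eqVlt => /orP [/eqP -> //|hs].
rewrite Y_unch ?IH //; apply/eqP; move: hs hj; lia.
Qed.

Lemma Y_init A z m t j : (t <= m)%N -> Yseq A z m t j = z j.
Proof. by elim: t => // t IH h /=; rewrite h IH // ltnW. Qed.

Lemma ext_eq A z m s j : (j < s + r)%N -> ext_sol A z m j = Yseq A z m s j.
Proof.
move=> hj; rewrite /ext_sol; case: (leqP j.+1 s) => h.
  by rewrite (@Y_stab A z m j.+1 s j h) // ltn_addr.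
by rewrite (@Y_stab A z m s j.+1 j) // ltnW.
Qed.

Lemma ext_init A z m j : (j < m + r)%N -> ext_sol A z m j = z j.
Proof. by move=> h; rewrite (@ext_eq A z m m j h) Y_init. Qed.

Lemma ext_psol A z m : NOp A -> (forall t, (t < m)%N -> op_apply A z t = 0) ->
  is_psol A (ext_sol A z m).
Proof.
move=> na hz t; case: (ltnP t m) => htm.
  rewrite -(hz t htm); apply: op_local => j hj.
  by rewrite ext_init //; move: hj htm; lia.
rewrite (@op_local _ _ (Yseq A z m t.+1)); last first.
  by move=> j hj; apply: ext_eq; move: hj; lia.
have -> : Yseq A z m t.+1 = fixstep A t (Yseq A z m t).
  by rewrite /= ltnNge htm.
rewrite op_split.
rewrite (@op_ext _ _ (fun j => if j == (t + r)%N then 0 else Yseq A z m t j)); last first.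
  by move=> j; rewrite /fixstep; case: eqP.
rewrite /fixstep eqxx.
have hac : A ord_max ord0 * ((t + r) ^_ r)%:R != 0 by rewrite mulf_neq0 // cnz.
by rewrite mulrC divfK // addNr.
Qed.

Lemma psol_uniq A y y' : NOp A -> is_psol A y -> is_psol A y' ->
  (forall j, (j < r)%N -> y j = y' j) -> forall j, y j = y' j.
Proof.
move=> na py py' h0.
suff H : forall p j, (j < p + r)%N -> y j = y' j.
  by move=> j; apply: (H j.+1); rewrite ltn_addr.
elim=> [|p IH] j hj; first exact: h0.
move: hj; rewrite addSn ltnS leq_eqVlt => /orP [/eqP ->|hj]; last exact: IH.
have e1 := py p; have e2 := py' p.
rewrite op_split in e1; rewrite op_split in e2.
have eR : op_apply A (fun j => if j == (p + r)%N then 0 else y j) p =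
          op_apply A (fun j => if j == (p + r)%N then 0 else y' j) p.
  apply: op_local => j' hj'; case: eqP => // hne; apply: IH.
  by move: hj' hne; lia.
rewrite eR in e1.
have hac : A ord_max ord0 * ((p + r) ^_ r)%:R != 0 by rewrite mulf_neq0 // cnz.
apply: (mulfI hac); apply: (addIr (op_apply A (fun j => if j == (p + r)%N then 0 else y' j) p)).
by rewrite e1 e2.
Qed.

Definition rowfun (M : 'M[C]_(r, (d + r).+1)) (i : 'I_r) (j : nat) : C :=
  if (j <= d + r)%N then M i (inord j) else 0.

Lemma fund_exists A : NOp A -> exists M, @is_fundmx C r d A (d + r) M.
Proof.
move=> na.
pose M := \matrix_(i < r, j < (d + r).+1)
   ext_sol A (fun j' => ((i : nat) == j')%:R) 0 j.
exists M; split.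
  by move=> i j hj; rewrite mxE ext_init.
move=> i; exists (ext_sol A (fun j' => ((i : nat) == j')%:R) 0); split.
  by apply: ext_psol.
by move=> j; rewrite mxE.
Qed.

Lemma fundmx_spec A : NOp A -> @is_fundmx C r d A (d + r) (fundmx A (d + r)).
Proof. by move=> na; apply: epsilon_spec; apply: fund_exists. Qed.

Lemma fund_uniq A M M' : NOp A -> @is_fundmx C r d A (d + r) M ->
  @is_fundmx C r d A (d + r) M' -> M = M'.
Proof.
move=> na [F hM] [F' hM']; apply/matrixP => i j.
have [y [py ey]] := hM i; have [y' [py' ey']] := hM' i.
rewrite ey ey'; apply: (psol_uniq na py py') => j' hj'.
have hj : (j' < (d + r).+1)%N by move: hj'; lia.
by rewrite -(ey (Ordinal hj)) -(ey' (Ordinal hj)) F ?F'.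
Qed.

Definition EM (M : 'M[C]_(r, (d + r).+1)) A :=
  forall (i : 'I_r) n, (n <= d)%N -> op_apply A (rowfun M i) n = 0.

Lemma fiber_char A M : NOp A -> Fspace M -> (fundmx A (d + r) = M <-> EM M A).
Proof.
move=> na F; split.
  move=> e i n hn; have := fundmx_spec na; rewrite e => -[_ hrow].
  have [y [py ey]] := hrow i.
  rewrite (@op_local _ _ y) ?py // => j hj.
  have hj' : (j <= d + r)%N by move: hj hn; lia.
  by rewrite /rowfun hj' ey inordK.
move=> E; symmetry; apply: (fund_uniq na _ (fundmx_spec na)); split => // i.
exists (ext_sol A (rowfun M i) d.+1); split.
  by apply: ext_psol => // t ht; apply: E.
move=> j; rewrite ext_init; last by have := ltn_ord j; lia.
by rewrite /rowfun -ltnS ltn_ord inord_val.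
Qed.

Definition Gfun (M : 'M[C]_(r, (d + r).+1)) A : 'M[C]_(r.+1, d.+1) :=
  \matrix_(j < r.+1, n < d.+1)
     oapp (fun i : 'I_r => op_apply A (rowfun M i) n) (A j n) (insub (j : nat)).

Lemma G_max M A k : Gfun M A ord_max k = A ord_max k.
Proof. by rewrite mxE insubF //= ltnn. Qed.

Lemma G_low M A (i : 'I_r) n :
  Gfun M A (widen_ord (leqnSn r) i) n = op_apply A (rowfun M i) n.
Proof. by rewrite mxE /= valK. Qed.

Lemma G_lin M (a : C) A A' : Gfun M (a *: A + A') = a *: Gfun M A + Gfun M A'.
Proof.
apply/matrixP => j n; rewrite !mxE; case: insub => [i|] /=.
  exact: op_linA.
by rewrite ?mxE.
Qed.

Definition F0 (B : 'M[C]_(r.+1, d.+1)) : Prop :=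
  (forall (i : 'I_r) (n : 'I_d.+1), B (widen_ord (leqnSn r) i) n = 0) /\
  B ord_max ord0 != 0.

Lemma fiber_F0 M A : Fspace M ->
  (NOp A /\ fundmx A (d + r) = M) <-> F0 (Gfun M A).
Proof.
move=> F; split.
  case=> na /(fiber_char na F) E; split; last by rewrite G_max.
  by move=> i n; rewrite G_low E // -ltnS.
case=> h1 h2.
have na : NOp A by rewrite /NOp -(G_max M).
split => //; apply/(fiber_char na F) => i n hn.
by have := h1 i (Ordinal (hn : (n < d.+1)%N)); rewrite G_low.
Qed.

Lemma G_inj M A : Fspace M -> Gfun M A = 0 -> A = 0.
Proof.
move=> F hG.
have hr : forall k, A ord_max k = 0.
  by move=> k; rewrite -(G_max M) hG mxE.
have hl : forall (i : 'I_r) n, (n <= d)%N -> op_apply A (rowfun M i) n = 0.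
  move=> i n hn; have := G_low M A i (Ordinal (hn : (n < d.+1)%N)).
  by rewrite hG mxE => <-.
suff H : forall n (k : 'I_d.+1), (k < n)%N -> forall j, A j k = 0.
  by apply/matrixP => j k; rewrite mxE; apply: (H k.+1).
elim=> [//|n IH] k hk j.
move: hk; rewrite ltnS leq_eqVlt => /orP [/eqP ek|hk]; last exact: IH.
case: (eqVneq j ord_max) => [->|hj]; first exact: hr.
have hjr : (j < r)%N.
  by have := ltn_ord j; rewrite ltnS leq_eqVlt => /orP [/eqP e|//]; case/eqP: hj; apply: val_inj.
pose i := Ordinal hjr.
have ej : j = widen_ord (leqnSn r) i by apply: val_inj.
have := hl i k (leq_ord k).
rewrite /op_apply.
have inner : forall i' : 'I_r.+1,
   \sum_(k' < d.+1 | (k' <= k)%N) A i' k' * ((k - k' + i') ^_ i')%:R * rowfun M i (k - k' + i')%N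
   = A i' k * (i'`!)%:R * rowfun M i i'.
  move=> i'; rewrite (bigD1 k) //= big1 ?addr0 => [|k' /andP [hk1 hk2]].
    by rewrite subnn add0n ffactnn.
  have -> : A i' k' = 0.
    apply: (IH k' _ i'); rewrite -ek ltn_neqAle hk1 andbT.
    by move: hk2; rewrite -val_eqE.
  by rewrite !mul0r.
under eq_bigr do rewrite inner.
rewrite (bigD1 j) //= big1 ?addr0 => [|i' hi'].
  rewrite /rowfun (_ : (j <= d + r)%N); last by have := hjr; lia.
  rewrite F /=; last by rewrite inordK //; have := hjr; lia.
  rewrite inordK; last by have := hjr; lia.
  rewrite ej /= eqxx mulr1 => /eqP; rewrite mulf_eq0 => /orP [/eqP //|].
  by rewrite (negbTE (natr_neq0 (fact_gt0 _))).
case: (eqVneq i' ord_max) => [->|hi2]; first by rewrite hr !mul0r.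
have hi'r : (i' < r)%N.
  by have := ltn_ord i'; rewrite ltnS leq_eqVlt => /orP [/eqP e|//]; case/eqP: hi2; apply: val_inj.
rewrite /rowfun (_ : (i' <= d + r)%N); last by move: hi'r; lia.
rewrite F /=; last by rewrite inordK //; lia.
rewrite inordK; last by move: hi'r; lia.
have -> : ((i : nat) == i') = false.
  by apply/negbTE; move: hi'; rewrite ej -val_eqE /= eq_sym.
by rewrite mulr0.
Qed.

Definition gfun M (v : 'rV[C]_(r.+1 * d.+1)) : 'rV[C]_(r.+1 * d.+1) :=
  mxvec (Gfun M (vec_mx v)).

Definition Bmat M : 'M[C]_(r.+1 * d.+1) := \matrix_(k, l) gfun M (delta_mx 0 k) 0 l.

Lemma gfun_lin M (a : C) u w : gfun M (a *: u + w) = a *: gfun M u + gfun M w.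
Proof. by rewrite /gfun linearP G_lin linearP. Qed.

Lemma Bmat_mul M v : v *m Bmat M = gfun M v.
Proof.
have g0 : gfun M 0 = 0.
  have := gfun_lin M (-1) 0 0.
  by rewrite scaler0 addr0 scaleN1r addNr.
have gD : {morph gfun M : x y / x + y >-> x + y}.
  move=> x y; have := gfun_lin M 1 x y; rewrite !scale1r; exact.
rewrite {2}(row_sum_delta v) (big_morph (gfun M) gD g0).
apply/rowP => l; rewrite !mxE summxE; apply: eq_bigr => k _.
have -> : gfun M (v 0 k *: delta_mx 0 k) = v 0 k *: gfun M (delta_mx 0 k).
  by rewrite -[_ *: delta_mx _ _]addr0 gfun_lin g0 addr0.
by rewrite !mxE.
Qed.

Lemma phi_G M A : phi (Bmat M) A = Gfun M A.
Proof. by rewrite /phi Bmat_mul /gfun !mxvecK. Qed.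

Lemma Bmat_unit M : Fspace M -> Bmat M \in unitmx.
Proof.
move=> F; rewrite -row_free_unit; apply: inj_row_free => v.
rewrite Bmat_mul /gfun => h.
have h2 : Gfun M (vec_mx v) = 0.
  by apply: (can_inj mxvecK); rewrite h linear0.
by rewrite -(vec_mxK v) (G_inj F h2) linear0.
Qed.

End ODE.

Theorem lemma20 (C : closedFieldType) (charC0 : [pchar C] =i pred0) (r d : nat) :
  let psi := fun A : 'M[C]_(r.+1, d.+1) => fundmx A (d + r) in
  (forall A, NOp A -> Fspace (psi A)) /\
  (forall M : 'M[C]_(r, (d + r).+1), Fspace M -> exists A, NOp A /\ psi A = M) /\
  (exists k : nat, forall M : 'M[C]_(r, (d + r).+1), Fspace M ->
      has_dim (fun A => NOp A /\ psi A = M) k).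
Proof.
move=> psi.
pose B0 : 'M[C]_(r.+1, d.+1) := delta_mx ord_max ord0.
have FB0 : F0 B0.
  split; last by rewrite mxE !eqxx oner_neq0.
  move=> i n; rewrite mxE.
  have -> : (widen_ord (leqnSn r) i == ord_max) = false.
    by apply/negbTE; rewrite -val_eqE /= neq_ltn ltn_ord.
  by [].
split.
  by move=> A na; case: (fundmx_spec charC0 na).
split.
  move=> M F; exists (phi (invmx (Bmat M)) B0).
  apply/(fiber_F0 charC0 _ F); rewrite -phi_G phiKV //.
  exact: Bmat_unit.
have [k hk] := exists_dim (ex_intro _ B0 FB0).
exists k => M F.
apply: (dim_transfer (Bmat_unit charC0 F) _ hk) => A.
by rewrite phi_G; apply: fiber_F0.
Qed.
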